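(* Let $\mathfrak{A}$ be a unital $\mathrm{C}^*$-algebra and $\mathfrak{S}\subset\mathfrak{A}$ an operator system. Let $\pi:\mathfrak{A}\to B(\mathcal{H})$ be a unital $*$-representation and $\Pi:\mathfrak{A}\to B(\mathcal{H})$ a unital completely positive map with $\Pi|_{\mathfrak{S}}=\pi|_{\mathfrak{S}}$. Let $\psi$ be a state on $\mathfrak{A}$ admitting a characteristic sequence $(\Delta_n)_n$ with $\Delta_n\in\mathfrak{S}$ for all $n$. Then $\limsup_{n\to\infty}\|\Pi(a)\pi(\Delta_n)\|\le\psi(a^*a)^{1/2}$ for every $a\in\mathfrak{A}$. Furthermore, $\lim_{n\to\infty}\|\pi(\Delta_n)^*\Pi(a)\pi(\Delta_n)\|=0$ for every self-adjoint $a\in\mathfrak{A}$ with $\psi(a)=0$.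
   Context: An operator system is a unital self-adjoint subspace of $\mathfrak{A}$. A sequence $(\Delta_n)_n$ in $\mathfrak{A}$ is a characteristic sequence for a state $\psi$ if (a) $\|\Delta_n\|=1$ for all $n$, (b) $\lim_{n\to\infty}\psi(\Delta_n)=1$, and (c) $\limsup_{n\to\infty}\|\Delta_n^*a\Delta_n\|\le|\psi(a)|$ for every $a\in\mathfrak{A}$. *)

(* Defs.v *)
From Stdlib Require Import Reals ClassicalEpsilon.
Open Scope R_scope.

Record Cplx := mkC { Cre : R; Cim : R }.
Definition C0 : Cplx := mkC 0 0.
Definition C1 : Cplx := mkC 1 0.
Definition CofR (r : R) : Cplx := mkC r 0.
Definition Cadd (a b : Cplx) : Cplx := mkC (Cre a + Cre b) (Cim a + Cim b).
Definition Cmul (a b : Cplx) : Cplx :=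
  mkC (Cre a * Cre b - Cim a * Cim b) (Cre a * Cim b + Cim a * Cre b).
Definition Cconj (a : Cplx) : Cplx := mkC (Cre a) (- Cim a).
Definition Cabs (a : Cplx) : R := sqrt (Cre a * Cre a + Cim a * Cim a).
Fixpoint Csum (n : nat) (f : nat -> Cplx) : Cplx :=
  match n with O => C0 | S k => Cadd (Csum k f) (f k) end.

Record CStarAlgebra := {
  ca_car :> Type;
  ca_zero : ca_car; ca_one : ca_car;
  ca_add : ca_car -> ca_car -> ca_car;
  ca_opp : ca_car -> ca_car;
  ca_scal : Cplx -> ca_car -> ca_car;
  ca_mul : ca_car -> ca_car -> ca_car;
  ca_star : ca_car -> ca_car;
  ca_norm : ca_car -> R;
  ca_addA : forall x y z, ca_add x (ca_add y z) = ca_add (ca_add x y) z;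
  ca_addC : forall x y, ca_add x y = ca_add y x;
  ca_add0 : forall x, ca_add x ca_zero = x;
  ca_addN : forall x, ca_add x (ca_opp x) = ca_zero;
  ca_scalA : forall a b x, ca_scal a (ca_scal b x) = ca_scal (Cmul a b) x;
  ca_scal1 : forall x, ca_scal C1 x = x;
  ca_scalDr : forall a x y, ca_scal a (ca_add x y) = ca_add (ca_scal a x) (ca_scal a y);
  ca_scalDl : forall a b x, ca_scal (Cadd a b) x = ca_add (ca_scal a x) (ca_scal b x);
  ca_mulA : forall x y z, ca_mul x (ca_mul y z) = ca_mul (ca_mul x y) z;
  ca_mul1l : forall x, ca_mul ca_one x = x;
  ca_mul1r : forall x, ca_mul x ca_one = x;
  ca_mulDl : forall x y z, ca_mul (ca_add x y) z = ca_add (ca_mul x z) (ca_mul y z);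
  ca_mulDr : forall x y z, ca_mul x (ca_add y z) = ca_add (ca_mul x y) (ca_mul x z);
  ca_scal_mull : forall a x y, ca_mul (ca_scal a x) y = ca_scal a (ca_mul x y);
  ca_scal_mulr : forall a x y, ca_mul x (ca_scal a y) = ca_scal a (ca_mul x y);
  ca_starK : forall x, ca_star (ca_star x) = x;
  ca_starD : forall x y, ca_star (ca_add x y) = ca_add (ca_star x) (ca_star y);
  ca_starZ : forall a x, ca_star (ca_scal a x) = ca_scal (Cconj a) (ca_star x);
  ca_starM : forall x y, ca_star (ca_mul x y) = ca_mul (ca_star y) (ca_star x);
  ca_norm_ge0 : forall x, 0 <= ca_norm x;
  ca_norm_eq0 : forall x, ca_norm x = 0 -> x = ca_zero;
  ca_norm_triangle : forall x y, ca_norm (ca_add x y) <= ca_norm x + ca_norm y;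
  ca_normZ : forall a x, ca_norm (ca_scal a x) = Cabs a * ca_norm x;
  ca_normM : forall x y, ca_norm (ca_mul x y) <= ca_norm x * ca_norm y;
  ca_cstar : forall x, ca_norm (ca_mul (ca_star x) x) = ca_norm x * ca_norm x;
  ca_complete : forall u : nat -> ca_car,
    (forall eps, eps > 0 -> exists N, forall m n, (m >= N)%nat -> (n >= N)%nat ->
        ca_norm (ca_add (u m) (ca_opp (u n))) < eps) ->
    exists l, forall eps, eps > 0 -> exists N, forall n, (n >= N)%nat ->
        ca_norm (ca_add (u n) (ca_opp l)) < eps
}.

Arguments ca_zero {_}. Arguments ca_one {_}. Arguments ca_add {_}.
Arguments ca_opp {_}. Arguments ca_scal {_}. Arguments ca_mul {_}.
Arguments ca_star {_}. Arguments ca_norm {_}.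

(* ---------- complex Hilbert spaces (inner product linear in 1st arg) ---- *)
Record HilbertSpace := {
  hs_car :> Type;
  hs_zero : hs_car;
  hs_add : hs_car -> hs_car -> hs_car;
  hs_opp : hs_car -> hs_car;
  hs_scal : Cplx -> hs_car -> hs_car;
  hs_inner : hs_car -> hs_car -> Cplx;
  hs_addA : forall x y z, hs_add x (hs_add y z) = hs_add (hs_add x y) z;
  hs_addC : forall x y, hs_add x y = hs_add y x;
  hs_add0 : forall x, hs_add x hs_zero = x;
  hs_addN : forall x, hs_add x (hs_opp x) = hs_zero;
  hs_scalA : forall a b x, hs_scal a (hs_scal b x) = hs_scal (Cmul a b) x;
  hs_scal1 : forall x, hs_scal C1 x = x;
  hs_scalDr : forall a x y, hs_scal a (hs_add x y) = hs_add (hs_scal a x) (hs_scal a y);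
  hs_scalDl : forall a b x, hs_scal (Cadd a b) x = hs_add (hs_scal a x) (hs_scal b x);
  hs_innerD : forall x y z, hs_inner (hs_add x y) z = Cadd (hs_inner x z) (hs_inner y z);
  hs_innerZ : forall a x y, hs_inner (hs_scal a x) y = Cmul a (hs_inner x y);
  hs_inner_conj : forall x y, hs_inner y x = Cconj (hs_inner x y);
  hs_inner_pos : forall x, 0 <= Cre (hs_inner x x);
  hs_inner_def : forall x, Cre (hs_inner x x) = 0 -> x = hs_zero;
  hs_complete : forall u : nat -> hs_car,
    (forall eps, eps > 0 -> exists N, forall m n, (m >= N)%nat -> (n >= N)%nat ->
        sqrt (Cre (hs_inner (hs_add (u m) (hs_opp (u n))) (hs_add (u m) (hs_opp (u n))))) < eps) ->
    exists l, forall eps, eps > 0 -> exists N, forall n, (n >= N)%nat ->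
        sqrt (Cre (hs_inner (hs_add (u n) (hs_opp l)) (hs_add (u n) (hs_opp l)))) < eps
}.

Arguments hs_zero {_}. Arguments hs_add {_}. Arguments hs_opp {_}.
Arguments hs_scal {_}. Arguments hs_inner {_}.

Definition hnorm {H : HilbertSpace} (x : H) : R := sqrt (Cre (hs_inner x x)).

Definition is_linear_op {H : HilbertSpace} (T : H -> H) : Prop :=
  (forall x y, T (hs_add x y) = hs_add (T x) (T y)) /\
  (forall a x, T (hs_scal a x) = hs_scal a (T x)).

Definition is_bounded_op {H : HilbertSpace} (T : H -> H) : Prop :=
  is_linear_op T /\ exists c, forall x, hnorm (T x) <= c * hnorm x.

Definition opnorm_le {H : HilbertSpace} (T : H -> H) (c : R) : Prop :=
  forall x, hnorm (T x) <= c * hnorm x.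

(* the Hilbert-space adjoint T^* (exists and is unique for bounded T) *)
Definition adjoint {H : HilbertSpace} (T : H -> H) : H -> H :=
  epsilon (inhabits (fun x : H => x))
    (fun S => forall x y, hs_inner (T x) y = hs_inner x (S y)).

Definition is_linear_map {A : CStarAlgebra} {H : HilbertSpace} (f : A -> H -> H) : Prop :=
  (forall a b x, f (ca_add a b) x = hs_add (f a x) (f b x)) /\
  (forall c a x, f (ca_scal c a) x = hs_scal c (f a x)).

Definition is_unital_star_rep {A : CStarAlgebra} {H : HilbertSpace} (pi : A -> H -> H) : Prop :=
  (forall a, is_bounded_op (pi a)) /\
  is_linear_map pi /\
  (forall a b x, pi (ca_mul a b) x = pi a (pi b x)) /\
  (forall x, pi ca_one x = x) /\
  (forall a x y, hs_inner (pi (ca_star a) x) y = hs_inner x (pi a y)).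

(* positive elements of M_n(A): matrices of the form X^* X, X in M_n(A) *)
Definition Asum {A : CStarAlgebra} (n : nat) (f : nat -> A) : A :=
  (fix s k := match k with O => ca_zero | S k' => ca_add (s k') (f k') end) n.

Definition is_pos_matrix {A : CStarAlgebra} (n : nat) (M : nat -> nat -> A) : Prop :=
  exists X : nat -> nat -> A, forall i j, (i < n)%nat -> (j < n)%nat ->
    M i j = Asum n (fun k => ca_mul (ca_star (X k i)) (X k j)).

(* unital completely positive map: each amplification Pi_n maps positive
   matrices of M_n(A) to positive operators on H^n *)
Definition is_ucp {A : CStarAlgebra} {H : HilbertSpace} (P : A -> H -> H) : Prop :=
  (forall a, is_bounded_op (P a)) /\
  is_linear_map P /\
  (forall x, P ca_one x = x) /\
  (forall (n : nat) (M : nat -> nat -> A) (xi : nat -> H),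
     is_pos_matrix n M ->
     let q := Csum n (fun i => Csum n (fun j => hs_inner (P (M i j) (xi j)) (xi i))) in
     Cim q = 0 /\ 0 <= Cre q).

Definition is_operator_system {A : CStarAlgebra} (S : A -> Prop) : Prop :=
  S ca_zero /\ S ca_one /\
  (forall a b, S a -> S b -> S (ca_add a b)) /\
  (forall c a, S a -> S (ca_scal c a)) /\
  (forall a, S a -> S (ca_star a)).

Definition is_state {A : CStarAlgebra} (psi : A -> Cplx) : Prop :=
  (forall a b, psi (ca_add a b) = Cadd (psi a) (psi b)) /\
  (forall c a, psi (ca_scal c a) = Cmul c (psi a)) /\
  (forall a, Cim (psi (ca_mul (ca_star a) a)) = 0 /\
             0 <= Cre (psi (ca_mul (ca_star a) a))) /\
  psi ca_one = C1.

Definition limsup_le (u : nat -> R) (L : R) : Prop :=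
  forall eps, eps > 0 -> exists N, forall n, (n >= N)%nat -> u n <= L + eps.

Definition is_characteristic_sequence {A : CStarAlgebra} (psi : A -> Cplx)
    (D : nat -> A) : Prop :=
  (forall n, ca_norm (D n) = 1) /\
  Un_cv (fun n => Cre (psi (D n))) 1 /\ Un_cv (fun n => Cim (psi (D n))) 0 /\
  (forall a, limsup_le (fun n => ca_norm (ca_mul (ca_mul (ca_star (D n)) a) (D n)))
                       (Cabs (psi a))).

(* Main.v *)
Require Import Defs.
From Stdlib Require Import Reals ClassicalEpsilon Lra Psatz.
Open Scope R_scope.
Arguments ca_addA {_}.
Arguments ca_addC {_}.
Arguments ca_add0 {_}.
Arguments ca_addN {_}.
Arguments ca_scalA {_}.
Arguments ca_scal1 {_}.
Arguments ca_scalDr {_}.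
Arguments ca_scalDl {_}.
Arguments ca_mulA {_}.
Arguments ca_mul1l {_}.
Arguments ca_mul1r {_}.
Arguments ca_mulDl {_}.
Arguments ca_mulDr {_}.
Arguments ca_scal_mull {_}.
Arguments ca_scal_mulr {_}.
Arguments ca_starK {_}.
Arguments ca_starD {_}.
Arguments ca_starZ {_}.
Arguments ca_starM {_}.
Arguments ca_norm_ge0 {_}.
Arguments ca_norm_eq0 {_}.
Arguments ca_norm_triangle {_}.
Arguments ca_normZ {_}.
Arguments ca_normM {_}.
Arguments ca_cstar {_}.
Arguments ca_complete {_}.
Arguments hs_addA {_}.
Arguments hs_addC {_}.
Arguments hs_add0 {_}.
Arguments hs_addN {_}.
Arguments hs_scalA {_}.
Arguments hs_scal1 {_}.
Arguments hs_scalDr {_}.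
Arguments hs_scalDl {_}.
Arguments hs_innerD {_}.
Arguments hs_innerZ {_}.
Arguments hs_inner_conj {_}.
Arguments hs_inner_pos {_}.
Arguments hs_inner_def {_}.
Arguments hs_complete {_}.

Lemma Cext (a b : Cplx) : Cre a = Cre b -> Cim a = Cim b -> a = b.
Proof. destruct a, b; simpl; intros; subst; reflexivity. Qed.

Ltac cext := apply Cext; simpl; try ring; try field.

Section Alg.
Context {A : CStarAlgebra}.

Lemma a_add0l (x : A) : ca_add ca_zero x = x.
Proof. rewrite ca_addC. apply ca_add0. Qed.

Lemma a_cancel (x y z : A) : ca_add x y = ca_add x z -> y = z.
Proof.
  intros E. rewrite <- (a_add0l y), <- (a_add0l z).
  rewrite <- (ca_addN x). rewrite (ca_addC x (ca_opp x)).
  rewrite <- !ca_addA, E. reflexivity.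
Qed.

Lemma a_scal0 (x : A) : ca_scal C0 x = ca_zero.
Proof.
  apply (a_cancel (ca_scal C0 x)). rewrite ca_add0, <- ca_scalDl.
  f_equal. cext.
Qed.

Lemma a_opp_scal (x : A) : ca_opp x = ca_scal (CofR (-1)) x.
Proof.
  apply (a_cancel x). rewrite ca_addN.
  rewrite <- (ca_scal1 x) at 1. rewrite <- ca_scalDl.
  rewrite <- (a_scal0 x). f_equal. cext.
Qed.

Lemma a_mul0r (x : A) : ca_mul x ca_zero = ca_zero.
Proof.
  apply (a_cancel (ca_mul x ca_zero)). rewrite ca_add0, <- ca_mulDr, ca_add0. reflexivity.
Qed.

Lemma a_mul0l (x : A) : ca_mul ca_zero x = ca_zero.
Proof.
  apply (a_cancel (ca_mul ca_zero x)). rewrite ca_add0, <- ca_mulDl, ca_add0. reflexivity.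
Qed.

Lemma a_scal_zero (c : Cplx) : ca_scal c (@ca_zero A) = ca_zero.
Proof.
  apply (a_cancel (ca_scal c ca_zero)). rewrite ca_add0, <- ca_scalDr, ca_add0. reflexivity.
Qed.

Lemma a_star0 : ca_star (@ca_zero A) = ca_zero.
Proof.
  rewrite <- (a_scal0 (@ca_zero A)) at 1. rewrite ca_starZ.
  replace (Cconj C0) with C0 by cext. apply a_scal0.
Qed.

Lemma a_star1 : ca_star (@ca_one A) = ca_one.
Proof.
  assert (E : ca_star (ca_mul (ca_star (@ca_one A)) ca_one) = ca_mul (ca_star ca_one) ca_one).
  { rewrite ca_starM, ca_starK. reflexivity. }
  rewrite ca_mul1r, ca_starK in E. auto.
Qed.

Lemma a_mul_oppr (x y : A) : ca_mul x (ca_opp y) = ca_opp (ca_mul x y).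
Proof. rewrite !a_opp_scal, ca_scal_mulr. reflexivity. Qed.
Lemma a_mul_oppl (x y : A) : ca_mul (ca_opp x) y = ca_opp (ca_mul x y).
Proof. rewrite !a_opp_scal, ca_scal_mull. reflexivity. Qed.
Lemma a_star_opp (x : A) : ca_star (ca_opp x) = ca_opp (ca_star x).
Proof. rewrite !a_opp_scal, ca_starZ. f_equal. cext. Qed.
Lemma a_opp_add (x y : A) : ca_opp (ca_add x y) = ca_add (ca_opp x) (ca_opp y).
Proof. rewrite !a_opp_scal, ca_scalDr. reflexivity. Qed.
Lemma a_opp_opp (x : A) : ca_opp (ca_opp x) = x.
Proof. rewrite !a_opp_scal, ca_scalA. replace (Cmul (CofR (-1)) (CofR (-1))) with Defs.C1 by cext. apply ca_scal1. Qed.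

Lemma Cabs_CofR r : Cabs (CofR r) = Rabs r.
Proof. unfold Cabs; simpl. replace (r * r + 0 * 0) with (Rsqr r) by (unfold Rsqr; ring). apply sqrt_Rsqr_abs. Qed.
Lemma Cabs_C0 : Cabs C0 = 0.
Proof. unfold Cabs; simpl. replace (0 * 0 + 0 * 0) with 0 by ring. apply sqrt_0. Qed.

Lemma a_norm0 : ca_norm (@ca_zero A) = 0.
Proof. rewrite <- (a_scal0 ca_zero), ca_normZ, Cabs_C0. ring. Qed.
Lemma a_norm_opp (x : A) : ca_norm (ca_opp x) = ca_norm x.
Proof. rewrite a_opp_scal, ca_normZ, Cabs_CofR, Rabs_left by lra. ring. Qed.

Lemma a_norm_star (x : A) : ca_norm (ca_star x) = ca_norm x.
Proof.
  assert (L : forall y : A, ca_norm y <= ca_norm (ca_star y)).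
  { intro y. pose proof (ca_cstar y) as C. pose proof (ca_normM (ca_star y) y) as M.
    pose proof (ca_norm_ge0 y). pose proof (ca_norm_ge0 (ca_star y)).
    destruct (Req_dec (ca_norm y) 0) as [Z|NZ]. lra.
    apply (Rmult_le_reg_r (ca_norm y)). lra. nra. }
  apply Rle_antisym. rewrite <- (ca_starK x) at 2. apply L. apply L.
Qed.

Definition asub (x y : A) := ca_add x (ca_opp y).

Lemma a_norm_sub_sym (x y : A) : ca_norm (asub x y) = ca_norm (asub y x).
Proof.
  unfold asub. rewrite <- a_norm_opp, a_opp_add, a_opp_opp, ca_addC. reflexivity.
Qed.

Lemma a_norm_sub_tri (x y z : A) : ca_norm (asub x z) <= ca_norm (asub x y) + ca_norm (asub y z).
Proof.
  unfold asub. replace (ca_add x (ca_opp z)) with (ca_add (ca_add x (ca_opp y)) (ca_add y (ca_opp z))).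
  apply ca_norm_triangle.
  rewrite <- ca_addA. f_equal. rewrite ca_addA, (ca_addC _ y), ca_addN, a_add0l. reflexivity.
Qed.

Lemma a_sub_eq0 (x y : A) : ca_norm (asub x y) = 0 -> x = y.
Proof.
  intro E. apply ca_norm_eq0 in E. unfold asub in E.
  assert (F : ca_add (ca_add x (ca_opp y)) y = x).
  { rewrite <- ca_addA, (ca_addC (ca_opp y)), ca_addN, ca_add0. reflexivity. }
  rewrite E, a_add0l in F. auto.
Qed.

End Alg.


Section Sq.
Context {A : CStarAlgebra}.

Lemma a_sub_chain (a b c : A) : ca_add (asub a b) (asub b c) = asub a c.
Proof.
  unfold asub. rewrite <- ca_addA. f_equal. rewrite ca_addA, (ca_addC _ b), ca_addN, a_add0l. reflexivity.
Qed.

Lemma a_scal_comm (c d : Cplx) (x : A) : ca_scal c (ca_scal d x) = ca_scal d (ca_scal c x).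
Proof. rewrite !ca_scalA. f_equal. cext. Qed.

Lemma a_scal_sub (c : Cplx) (x y : A) : asub (ca_scal c x) (ca_scal c y) = ca_scal c (asub x y).
Proof. unfold asub. rewrite ca_scalDr, !a_opp_scal, a_scal_comm. reflexivity. Qed.

Lemma a_sub_add (a b c d : A) : asub (ca_add a b) (ca_add c d) = ca_add (asub a c) (asub b d).
Proof.
  unfold asub. rewrite a_opp_add. rewrite <- !ca_addA. f_equal.
  rewrite (ca_addC b), <- ca_addA. f_equal. apply ca_addC.
Qed.

Lemma a_sub_diag (a : A) : asub a a = ca_zero.
Proof. apply ca_addN. Qed.

Lemma a_sub_add_same (a b : A) : asub (ca_add a b) (ca_add a b) = ca_zero.
Proof. apply ca_addN. Qed.

Lemma a_add_sub_l (a b : A) : asub (ca_add a b) a = b.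
Proof. unfold asub. rewrite (ca_addC a b), <- ca_addA, ca_addN, ca_add0. reflexivity. Qed.

Lemma a_sqdiff (Y Z : A) :
  asub (ca_mul Y Y) (ca_mul Z Z) = ca_add (ca_mul Y (asub Y Z)) (ca_mul (asub Y Z) Z).
Proof.
  unfold asub at 2 3. rewrite ca_mulDr, ca_mulDl, a_mul_oppr, a_mul_oppl.
  fold (asub (ca_mul Y Y) (ca_mul Y Z)). fold (asub (ca_mul Y Z) (ca_mul Z Z)).
  rewrite a_sub_chain. reflexivity.
Qed.

Lemma a_opp0 : ca_opp (@ca_zero A) = ca_zero.
Proof. rewrite a_opp_scal. apply a_scal_zero. Qed.

Lemma a_sub0 (x : A) : asub x ca_zero = x.
Proof. unfold asub. rewrite a_opp0. apply ca_add0. Qed.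

Lemma a_star_sub (x y : A) : ca_star (asub x y) = asub (ca_star x) (ca_star y).
Proof. unfold asub. rewrite ca_starD, a_star_opp. reflexivity. Qed.

Lemma a_norm_half (x : A) : ca_norm (ca_scal (CofR (1/2)) x) = / 2 * ca_norm x.
Proof. rewrite ca_normZ, Cabs_CofR, Rabs_right. lra. lra. Qed.

Lemma a_lim_unique (u : nat -> A) (l1 l2 : A) :
  (forall eps, eps > 0 -> exists N, forall n, (n >= N)%nat -> ca_norm (asub (u n) l1) < eps) ->
  (forall eps, eps > 0 -> exists N, forall n, (n >= N)%nat -> ca_norm (asub (u n) l2) < eps) ->
  l1 = l2.
Proof.
  intros H1 H2. apply a_sub_eq0.
  apply Rle_antisym; [| apply ca_norm_ge0].
  apply Rnot_lt_le; intro P.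
  destruct (H1 (ca_norm (asub l1 l2) / 2)) as [N1 HN1]; [lra|].
  destruct (H2 (ca_norm (asub l1 l2) / 2)) as [N2 HN2]; [lra|].
  specialize (HN1 (max N1 N2) (Nat.le_max_l _ _)). specialize (HN2 (max N1 N2) (Nat.le_max_r _ _)).
  pose proof (a_norm_sub_tri l1 (u (max N1 N2)) l2) as T.
  rewrite (a_norm_sub_sym l1 (u (max N1 N2))) in T. lra.
Qed.

Definition Fq (h Y : A) : A := ca_scal (CofR (1/2)) (ca_add h (ca_mul Y Y)).

Fixpoint Yseq (h : A) (n : nat) : A :=
  match n with O => ca_zero | S k => Fq h (Yseq h k) end.

Lemma Fq_norm (h Y : A) (q r : R) : ca_norm h <= q -> ca_norm Y <= r -> 0 <= r ->
  ca_norm (Fq h Y) <= (q + r * r) / 2.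
Proof.
  intros Hh HY Hr. unfold Fq. rewrite a_norm_half.
  pose proof (ca_norm_triangle h (ca_mul Y Y)). pose proof (ca_normM Y Y).
  pose proof (ca_norm_ge0 Y). nra.
Qed.

Lemma Fq_lip (h Y Z : A) (r : R) : ca_norm Y <= r -> ca_norm Z <= r ->
  ca_norm (asub (Fq h Y) (Fq h Z)) <= r * ca_norm (asub Y Z).
Proof.
  intros HY HZ. unfold Fq. rewrite a_scal_sub, a_norm_half, a_sub_add, a_sub_diag, a_add0l, a_sqdiff.
  pose proof (ca_norm_triangle (ca_mul Y (asub Y Z)) (ca_mul (asub Y Z) Z)).
  pose proof (ca_normM Y (asub Y Z)). pose proof (ca_normM (asub Y Z) Z).
  pose proof (ca_norm_ge0 Y). pose proof (ca_norm_ge0 Z). pose proof (ca_norm_ge0 (asub Y Z)).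
  nra.
Qed.

Lemma sqrt_lemma (h : A) (q : R) : ca_star h = h -> ca_norm h <= q -> q < 1 ->
  exists d : A, ca_mul (ca_star d) d = asub ca_one h.
Proof.
  intros Hs Hh Hq.
  pose proof (ca_norm_ge0 h) as Hh0.
  set (r := 1 - sqrt (1 - q)).
  assert (Hsq : sqrt (1 - q) * sqrt (1 - q) = 1 - q) by (apply sqrt_sqrt; lra).
  assert (Hs0 : 0 < sqrt (1 - q)) by (apply sqrt_lt_R0; lra).
  assert (Hs1 : sqrt (1 - q) <= 1).
  { apply Rle_trans with (sqrt 1); [apply sqrt_le_1_alt; lra | rewrite sqrt_1; lra]. }
  assert (Hr0 : 0 <= r) by (unfold r; lra).
  assert (Hr1 : r < 1) by (unfold r; lra).
  assert (Hfix : (q + r * r) / 2 = r).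
  { unfold r. replace ((1 - sqrt (1 - q)) * (1 - sqrt (1 - q))) with
      (1 - 2 * sqrt (1 - q) + sqrt (1 - q) * sqrt (1 - q)) by ring. rewrite Hsq. field. }
  assert (Hbnd : forall n, ca_norm (Yseq h n) <= r).
  { induction n; simpl. rewrite a_norm0. lra. rewrite <- Hfix. apply Fq_norm; auto. }
  assert (Hstep : forall n, ca_norm (asub (Yseq h (S n)) (Yseq h n)) <= r ^ (S n)).
  { induction n.
    - simpl Yseq. rewrite a_sub0. specialize (Hbnd 1%nat). simpl in Hbnd. simpl. lra.
    - change (Yseq h (S (S n))) with (Fq h (Yseq h (S n))).
      change (Yseq h (S n)) with (Fq h (Yseq h n)) at 2.
      eapply Rle_trans. apply Fq_lip; apply Hbnd.
      simpl. simpl in IHn. apply Rmult_le_compat_l; auto. }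
  assert (Hcau : forall n k, ca_norm (asub (Yseq h (k + n)) (Yseq h n)) <= r ^ (S n) / (1 - r) - r ^ (S (k + n)) / (1 - r)).
  { intros n k. induction k.
    - simpl. rewrite a_sub_diag, a_norm0. lra.
    - eapply Rle_trans. rewrite <- (a_sub_chain _ (Yseq h (k + n))). apply ca_norm_triangle.
      specialize (Hstep (k + n)%nat). simpl plus.
      replace (r ^ S (S (k + n))) with (r * r ^ S (k + n)) by reflexivity.
      assert (r ^ S (k + n) / (1 - r) - r * r ^ S (k + n) / (1 - r) = r ^ S (k + n)) by (field; lra).
      lra. }
  assert (Hcau2 : forall n m, (m >= n)%nat -> ca_norm (asub (Yseq h m) (Yseq h n)) <= r ^ n / (1 - r)).
  { intros n m Hmn. replace m with ((m - n) + n)%nat by lia.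
    eapply Rle_trans. apply Hcau.
    assert (0 <= r ^ S (m - n + n) / (1 - r)).
    { apply Rmult_le_pos. apply pow_le; lra. left; apply Rinv_0_lt_compat; lra. }
    change (r ^ S n) with (r * r ^ n). assert (r * r ^ n / (1 - r) <= r ^ n / (1 - r)).
    { unfold Rdiv. rewrite Rmult_assoc. rewrite <- (Rmult_1_l (r ^ n * / (1 - r))) at 2.
      apply Rmult_le_compat_r; [|lra]. apply Rmult_le_pos. apply pow_le; lra. left; apply Rinv_0_lt_compat; lra. }
    lra. }
  assert (Hsmall : forall eps, eps > 0 -> exists N, forall n, (n >= N)%nat -> r ^ n / (1 - r) < eps).
  { intros eps Heps. destruct (pow_lt_1_zero r (ltac:(rewrite Rabs_right; lra)) (eps * (1 - r)))
      as [N HN]. apply Rmult_lt_0_compat; lra.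
    exists N. intros n Hn. specialize (HN n Hn). rewrite Rabs_right in HN.
    apply (Rmult_lt_reg_r (1 - r)). lra. unfold Rdiv. rewrite Rmult_assoc, Rinv_l, Rmult_1_r by lra. lra.
    apply Rle_ge, pow_le; lra. }
  destruct (ca_complete (Yseq h)) as [y Hy].
  { intros eps Heps. destruct (Hsmall eps Heps) as [N HN]. exists N. intros m n Hm Hn.
    destruct (Nat.le_ge_cases m n).
    - fold (asub (Yseq h m) (Yseq h n)). rewrite a_norm_sub_sym.
      eapply Rle_lt_trans. apply Hcau2. lia. apply HN. lia.
    - fold (asub (Yseq h m) (Yseq h n)).
      eapply Rle_lt_trans. apply Hcau2. lia. apply HN. lia. }
  change (forall eps, eps > 0 -> exists N, forall n, (n >= N)%nat -> ca_norm (asub (Yseq h n) y) < eps) in Hy.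
  assert (Hyb : ca_norm y <= r).
  { apply Rnot_lt_le. intro P. destruct (Hy (ca_norm y - r)) as [N HN]. lra.
    specialize (HN N (le_n _)). pose proof (a_norm_sub_tri y (Yseq h N) ca_zero).
    rewrite !a_sub0 in H. rewrite (a_norm_sub_sym y) in H. specialize (Hbnd N). lra. }
  assert (Hfy : y = Fq h y).
  { apply (a_lim_unique (fun n => Yseq h (S n))).
    - intros eps Heps. destruct (Hy eps Heps) as [N HN]. exists N. intros n Hn. apply HN. lia.
    - intros eps Heps. destruct (Hy eps Heps) as [N HN]. exists N. intros n Hn.
      simpl. eapply Rle_lt_trans. apply Fq_lip. apply Hbnd. apply Hyb.
      specialize (HN n Hn). pose proof (ca_norm_ge0 (asub (Yseq h n) y)). nra. }
  assert (Hsy : ca_star y = y).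
  { assert (SY : forall n, ca_star (Yseq h n) = Yseq h n).
    { induction n; simpl. apply a_star0. unfold Fq. rewrite ca_starZ, ca_starD, ca_starM, IHn, Hs.
      f_equal. cext. }
    apply (a_lim_unique (Yseq h)); auto.
    intros eps Heps. destruct (Hy eps Heps) as [N HN]. exists N. intros n Hn.
    rewrite <- SY, <- a_star_sub, a_norm_star. auto. }
  exists (asub ca_one y).
  rewrite a_star_sub, a_star1, Hsy.
  (* (1 - y)(1 - y) = 1 - h using 2y = h + yy *)
  assert (E2 : ca_add y y = ca_add h (ca_mul y y)).
  { rewrite Hfy at 1 2. unfold Fq. rewrite <- ca_scalDl.
    replace (Cadd (CofR (1/2)) (CofR (1/2))) with Defs.C1 by cext. apply ca_scal1. }
  unfold asub. rewrite ca_mulDl, !ca_mulDr.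
  repeat (rewrite ?ca_mul1l, ?ca_mul1r, ?a_mul_oppl, ?a_mul_oppr, ?a_opp_opp).
  rewrite <- ca_addA. f_equal.
  apply (a_cancel (ca_add y y)). rewrite E2 at 2.
  rewrite ca_addA. rewrite <- (ca_addA y y (ca_opp y)), ca_addN, ca_add0.
  rewrite ca_addA, ca_addN, a_add0l.
  rewrite (ca_addC h (ca_mul y y)), <- ca_addA, ca_addN, ca_add0. reflexivity.
Qed.

End Sq.


Section PF.
Context {A : CStarAlgebra}.

Lemma pos_functional_bound (f : A -> Cplx)
  (fadd : forall a b, f (ca_add a b) = Cadd (f a) (f b))
  (fscal : forall c a, f (ca_scal c a) = Cmul c (f a))
  (fpos : forall z, 0 <= Cre (f (ca_mul (ca_star z) z))) :
  forall c, Cre (f (ca_mul (ca_star c) c)) <= ca_norm c * ca_norm c * Cre (f ca_one).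
Proof.
  intro c. set (k := ca_norm c). set (X := Cre (f (ca_mul (ca_star c) c))).
  set (Y := Cre (f ca_one)).
  assert (HY : 0 <= Y). { unfold Y. rewrite <- ca_mul1l, <- a_star1 at 1. apply fpos. }
  assert (Hk : 0 <= k) by apply ca_norm_ge0.
  assert (Hs : forall s, s > k -> X <= s * s * Y).
  { intros s Hsk.
    set (h := ca_scal (CofR (/ (s * s))) (ca_mul (ca_star c) c)).
    assert (Hsh : ca_star h = h).
    { unfold h. rewrite ca_starZ, ca_starM, ca_starK. f_equal. cext. }
    assert (Hnh : ca_norm h = k * k / (s * s)).
    { unfold h. rewrite ca_normZ, ca_cstar, Cabs_CofR, Rabs_right. fold k. field. lra.
      apply Rle_ge. left. apply Rinv_0_lt_compat. nra. }
    assert (Hlt : k * k / (s * s) < 1).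
    { apply (Rmult_lt_reg_r (s * s)). nra.
      replace (k * k / (s * s) * (s * s)) with (k * k) by (field; nra). nra. }
    destruct (sqrt_lemma h (k * k / (s * s)) Hsh (Req_le _ _ Hnh) Hlt) as [d Hd].
    pose proof (fpos d) as P. rewrite Hd in P. unfold asub in P.
    rewrite fadd, a_opp_scal, fscal in P. unfold h in P. rewrite fscal in P. simpl in P.
    fold X Y in P.
    assert (0 < / (s * s)) by (apply Rinv_0_lt_compat; nra).
    assert (X * / (s * s) <= Y) by nra.
    apply (Rmult_le_reg_r (/ (s * s))). auto.
    replace (s * s * Y * / (s * s)) with Y by (field; nra). auto. }
  destruct (Req_dec Y 0) as [Y0|Y0].
  - specialize (Hs (k + 1) ltac:(lra)). rewrite Y0 in *. lra.
  - apply Rnot_lt_le. intro Hc.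
    set (t := (X / Y + k * k) / 2).
    assert (Ht1 : k * k < t).
    { unfold t. assert (k * k * Y < X) by lra. assert (k * k < X / Y).
      { apply (Rmult_lt_reg_r Y). lra.
        replace (X / Y * Y) with X by (field; lra). lra. }
      lra. }
    assert (Ht2 : t * Y < X).
    { unfold t. assert (k * k * Y < X) by lra.
      replace ((X / Y + k * k) / 2 * Y) with ((X + k * k * Y) / 2) by (field; lra). lra. }
    assert (Hsq : sqrt t > k).
    { rewrite <- (sqrt_Rsqr k Hk). apply sqrt_lt_1_alt. unfold Rsqr. split; nra. }
    specialize (Hs (sqrt t) Hsq). rewrite sqrt_sqrt in Hs by nra. lra.
Qed.

End PF.


Section Hil.
Context {H : HilbertSpace}.

Lemma h_add0l (x : H) : hs_add hs_zero x = x.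
Proof. rewrite hs_addC. apply hs_add0. Qed.

Lemma h_cancel (x y z : H) : hs_add x y = hs_add x z -> y = z.
Proof.
  intros E. rewrite <- (h_add0l y), <- (h_add0l z).
  rewrite <- (hs_addN x). rewrite (hs_addC x (hs_opp x)).
  rewrite <- !hs_addA, E. reflexivity.
Qed.

Lemma h_scal0 (x : H) : hs_scal C0 x = hs_zero.
Proof.
  apply (h_cancel (hs_scal C0 x)). rewrite hs_add0, <- hs_scalDl. f_equal. cext.
Qed.

Lemma h_scal_zero (c : Cplx) : hs_scal c (@hs_zero H) = hs_zero.
Proof. apply (h_cancel (hs_scal c hs_zero)). rewrite hs_add0, <- hs_scalDr, hs_add0. reflexivity. Qed.

Lemma h_opp_scal (x : H) : hs_opp x = hs_scal (CofR (-1)) x.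
Proof.
  apply (h_cancel x). rewrite hs_addN.
  rewrite <- (hs_scal1 x) at 1. rewrite <- hs_scalDl.
  rewrite <- (h_scal0 x). f_equal. cext.
Qed.

Definition hsub (x y : H) := hs_add x (hs_opp y).

Lemma inner_0l (y : H) : hs_inner hs_zero y = C0.
Proof. rewrite <- (h_scal0 hs_zero), hs_innerZ. cext. Qed.
Lemma inner_0r (y : H) : hs_inner y hs_zero = C0.
Proof. rewrite hs_inner_conj, inner_0l. cext. Qed.

Lemma inner_addr (x y z : H) : hs_inner x (hs_add y z) = Cadd (hs_inner x y) (hs_inner x z).
Proof. rewrite hs_inner_conj, hs_innerD, (hs_inner_conj y x), (hs_inner_conj z x). cext. Qed.

Lemma inner_scalr (c : Cplx) (x y : H) : hs_inner x (hs_scal c y) = Cmul (Cconj c) (hs_inner x y).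
Proof. rewrite hs_inner_conj, hs_innerZ, (hs_inner_conj y x). cext. Qed.

Lemma inner_oppl (x y : H) : hs_inner (hs_opp x) y = Cmul (CofR (-1)) (hs_inner x y).
Proof. rewrite h_opp_scal, hs_innerZ. reflexivity. Qed.
Lemma inner_oppr (x y : H) : hs_inner x (hs_opp y) = Cmul (CofR (-1)) (hs_inner x y).
Proof. rewrite h_opp_scal, inner_scalr. f_equal. cext. Qed.

Lemma inner_im_self (x : H) : Cim (hs_inner x x) = 0.
Proof. pose proof (f_equal Cim (hs_inner_conj x x)). simpl in H0. lra. Qed.

Lemma hnorm_ge0 (x : H) : 0 <= hnorm x.
Proof. apply sqrt_pos. Qed.
Lemma hnorm_sq (x : H) : hnorm x * hnorm x = Cre (hs_inner x x).
Proof. apply sqrt_sqrt, hs_inner_pos. Qed.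

Definition rin (x y : H) := Cre (hs_inner x y).
Lemma rin_sym (x y : H) : rin x y = rin y x.
Proof. unfold rin. rewrite hs_inner_conj. reflexivity. Qed.
Lemma rin_addl (x y z : H) : rin (hs_add x y) z = rin x z + rin y z.
Proof. unfold rin. rewrite hs_innerD. reflexivity. Qed.
Lemma rin_addr (x y z : H) : rin x (hs_add y z) = rin x y + rin x z.
Proof. unfold rin. rewrite inner_addr. reflexivity. Qed.
Lemma rin_oppl (x y : H) : rin (hs_opp x) y = - rin x y.
Proof. unfold rin. rewrite inner_oppl. simpl. ring. Qed.
Lemma rin_oppr (x y : H) : rin x (hs_opp y) = - rin x y.
Proof. unfold rin. rewrite inner_oppr. simpl. ring. Qed.
Lemma rin_scall_real (r : R) (x y : H) : rin (hs_scal (CofR r) x) y = r * rin x y.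
Proof. unfold rin. rewrite hs_innerZ. simpl. ring. Qed.
Lemma rin_scalr_real (r : R) (x y : H) : rin x (hs_scal (CofR r) y) = r * rin x y.
Proof. unfold rin. rewrite inner_scalr. simpl. ring. Qed.
Lemma rin_self (x : H) : rin x x = hnorm x * hnorm x.
Proof. rewrite hnorm_sq. reflexivity. Qed.

Lemma cauchy_schwarz_re (x y : H) : rin x y <= hnorm x * hnorm y.
Proof.
  assert (Q : forall t, 0 <= hnorm x * hnorm x + 2 * t * rin x y + t * t * (hnorm y * hnorm y)).
  { intro t. pose proof (hs_inner_pos (hs_add x (hs_scal (CofR t) y))) as P.
    fold (rin (hs_add x (hs_scal (CofR t) y)) (hs_add x (hs_scal (CofR t) y))) in P.
    rewrite rin_addl, !rin_addr, !rin_scall_real, !rin_scalr_real, !rin_self, (rin_sym y x) in P. nra. }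
  pose proof (hnorm_ge0 x). pose proof (hnorm_ge0 y).
  destruct (Req_dec (hnorm y) 0) as [Y0|Y0].
  - destruct (Rle_dec (rin x y) 0). nra.
    specialize (Q (- (hnorm x * hnorm x + 1) / (2 * rin x y))).
    rewrite Y0 in Q. replace (2 * (- (hnorm x * hnorm x + 1) / (2 * rin x y)) * rin x y) with
      (- (hnorm x * hnorm x + 1)) in Q by (field; lra). nra.
  - specialize (Q (- rin x y / (hnorm y * hnorm y))).
    assert (E : hnorm x * hnorm x + 2 * (- rin x y / (hnorm y * hnorm y)) * rin x y +
      - rin x y / (hnorm y * hnorm y) * (- rin x y / (hnorm y * hnorm y)) * (hnorm y * hnorm y)
      = hnorm x * hnorm x - rin x y * rin x y * / (hnorm y * hnorm y)) by (field; lra).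
    rewrite E in Q.
    assert (rin x y * rin x y <= (hnorm x * hnorm y) * (hnorm x * hnorm y)).
    { assert (0 < hnorm y * hnorm y) by nra.
      apply (Rmult_le_reg_r (/ (hnorm y * hnorm y))). apply Rinv_0_lt_compat; lra.
      replace (hnorm x * hnorm y * (hnorm x * hnorm y) * / (hnorm y * hnorm y)) with (hnorm x * hnorm x)
        by (field; lra). lra. }
    assert (0 <= hnorm x * hnorm y) by nra.
    destruct (Rle_dec (rin x y) (hnorm x * hnorm y)); auto. nra.
Qed.

Lemma hnorm_triangle (x y : H) : hnorm (hs_add x y) <= hnorm x + hnorm y.
Proof.
  pose proof (hnorm_ge0 x). pose proof (hnorm_ge0 y). pose proof (hnorm_ge0 (hs_add x y)).
  pose proof (rin_self (hs_add x y)) as E. rewrite rin_addl, !rin_addr, !rin_self, (rin_sym y x) in E.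
  pose proof (cauchy_schwarz_re x y). nra.
Qed.

Lemma hnorm_scal (c : Cplx) (x : H) : hnorm (hs_scal c x) = Cabs c * hnorm x.
Proof.
  unfold hnorm, Cabs. rewrite <- sqrt_mult. f_equal.
  rewrite hs_innerZ, inner_scalr. pose proof (inner_im_self x). destruct c as [a b]. simpl.
  rewrite H0. ring.
  nra. apply hs_inner_pos.
Qed.

Lemma hnorm_opp (x : H) : hnorm (hs_opp x) = hnorm x.
Proof. rewrite h_opp_scal, hnorm_scal, Cabs_CofR, Rabs_left by lra. ring. Qed.

Lemma hnorm_sub_tri (x y z : H) : hnorm (hsub x z) <= hnorm (hsub x y) + hnorm (hsub y z).
Proof.
  unfold hsub. replace (hs_add x (hs_opp z)) with (hs_add (hs_add x (hs_opp y)) (hs_add y (hs_opp z))).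
  apply hnorm_triangle.
  rewrite <- hs_addA. f_equal. rewrite hs_addA, (hs_addC _ y), hs_addN, h_add0l. reflexivity.
Qed.

Lemma hnorm_zero : hnorm (@hs_zero H) = 0.
Proof. unfold hnorm. rewrite inner_0l. simpl. apply sqrt_0. Qed.

Lemma hnorm_eq0 (x : H) : hnorm x = 0 -> x = hs_zero.
Proof. intro E. apply hs_inner_def. rewrite <- hnorm_sq, E. ring. Qed.

Lemma cauchy_schwarz_c (x y : H) :
  Cre (hs_inner x y) * Cre (hs_inner x y) + Cim (hs_inner x y) * Cim (hs_inner x y)
  <= (hnorm x * hnorm y) * (hnorm x * hnorm y).
Proof.
  set (g := hs_inner x y).
  pose proof (cauchy_schwarz_re x (hs_scal g y)) as C.
  unfold rin in C. rewrite inner_scalr, hnorm_scal in C. fold g in C. simpl in C.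
  unfold Cabs in C.
  set (m := Cre g * Cre g + Cim g * Cim g) in *.
  assert (Hm : 0 <= m) by (unfold m; nra).
  replace (Cre g * Cre g - - Cim g * Cim g) with m in C by (unfold m; ring).
  pose proof (sqrt_pos m). pose proof (sqrt_sqrt m Hm).
  pose proof (hnorm_ge0 x). pose proof (hnorm_ge0 y).
  destruct (Req_dec (sqrt m) 0) as [Z|Z]. nra.
  assert (sqrt m <= hnorm x * hnorm y).
  { apply (Rmult_le_reg_r (sqrt m)). lra. nra. }
  nra.
Qed.

End Hil.


Section UCP.
Context {A : CStarAlgebra} {H : HilbertSpace} (P : A -> H -> H) (hP : is_ucp P).

Lemma ucp_op_add a x y : P a (hs_add x y) = hs_add (P a x) (P a y).
Proof. destruct hP as [B _]. apply (proj1 (proj1 (B a))). Qed.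
Lemma ucp_op_scal a c x : P a (hs_scal c x) = hs_scal c (P a x).
Proof. destruct hP as [B _]. apply (proj2 (proj1 (B a))). Qed.
Lemma ucp_add a b x : P (ca_add a b) x = hs_add (P a x) (P b x).
Proof. destruct hP as [_ [[L _] _]]. apply L. Qed.
Lemma ucp_scal c a x : P (ca_scal c a) x = hs_scal c (P a x).
Proof. destruct hP as [_ [[_ L] _]]. apply L. Qed.
Lemma ucp_one x : P ca_one x = x.
Proof. destruct hP as [_ [_ [O _]]]. apply O. Qed.
Lemma ucp_op_zero a : P a hs_zero = hs_zero.
Proof. rewrite <- (h_scal0 hs_zero) at 1. rewrite ucp_op_scal. apply h_scal0. Qed.
Lemma ucp_op_opp a x : P a (hs_opp x) = hs_opp (P a x).
Proof. rewrite !h_opp_scal. apply ucp_op_scal. Qed.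
Lemma ucp_opp a x : P (ca_opp a) x = hs_opp (P a x).
Proof. rewrite a_opp_scal, h_opp_scal. apply ucp_scal. Qed.

Definition xv (u v : A) (i : nat) : A := match i with O => ca_one | S O => u | _ => v end.
Definition xs (x0 x1 x2 : H) (i : nat) : H := match i with O => x0 | S O => x1 | _ => x2 end.

Lemma ucp_pos3 (u v : A) (x0 x1 x2 : H) :
  let q := Csum 3%nat (fun i => Csum 3%nat (fun j =>
     hs_inner (P (ca_mul (ca_star (xv u v i)) (xv u v j)) (xs x0 x1 x2 j)) (xs x0 x1 x2 i))) in
  Cim q = 0 /\ 0 <= Cre q.
Proof.
  destruct hP as [_ [_ [_ Pos]]].
  apply (Pos 3%nat (fun i j => ca_mul (ca_star (xv u v i)) (xv u v j)) (xs x0 x1 x2)).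
  exists (fun k i => match k with O => xv u v i | _ => ca_zero end).
  intros i j _ _. simpl. rewrite !a_star0, !a_mul0l, !ca_add0, a_add0l. reflexivity.
Qed.

Lemma ucp_herm (u : A) (x y : H) : hs_inner (P (ca_star u) x) y = hs_inner x (P u y).
Proof.
  assert (Sa : forall z, Cim (hs_inner (P (ca_mul (ca_star u) u) z) z) = 0).
  { intro z. destruct (ucp_pos3 u ca_zero hs_zero z hs_zero) as [I _].
    simpl in I. rewrite !ucp_op_zero, !inner_0l, !inner_0r in I. simpl in I. lra. }
  assert (Sb : forall x0 x1, Cim (hs_inner (P u x1) x0) + Cim (hs_inner (P (ca_star u) x0) x1) = 0).
  { intros x0 x1. destruct (ucp_pos3 u ca_zero x0 x1 hs_zero) as [I _].
    simpl in I. rewrite !ucp_op_zero, !inner_0l, !inner_0r in I. simpl in I.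
    rewrite a_star1, !ca_mul1l, !ca_mul1r, ucp_one, inner_im_self, Sa in I. lra. }
  pose proof (Sb x y) as B1.
  pose proof (Sb x (hs_scal (mkC 0 1) y)) as B2.
  rewrite ucp_op_scal, hs_innerZ, inner_scalr in B2. simpl in B2.
  apply Cext.
  - rewrite (hs_inner_conj (P u y) x). simpl. lra.
  - rewrite (hs_inner_conj (P u y) x). simpl. lra.
Qed.

Lemma ucp_schwarz_re (u v : A) (x1 x2 : H) :
  0 <= (rin (P (ca_mul (ca_star u) u) x1) x1 - hnorm (P u x1) * hnorm (P u x1))
     + (rin (P (ca_mul (ca_star v) v) x2) x2 - hnorm (P v x2) * hnorm (P v x2))
     + 2 * (rin (P (ca_mul (ca_star u) v) x2) x1 - rin (P v x2) (P u x1)).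
Proof.
  set (w := hs_add (P u x1) (P v x2)).
  destruct (ucp_pos3 u v (hs_opp w) x1 x2) as [_ R].
  simpl in R. fold (rin (P (ca_mul (ca_star ca_one) ca_one) (hs_opp w)) (hs_opp w)) in R.
  repeat match type of R with context [Cre (hs_inner ?a ?b)] => fold (rin a b) in R end.
  rewrite a_star1, !ca_mul1l, !ca_mul1r, ucp_one in R.
  rewrite !ucp_op_opp, !rin_oppl, !rin_oppr in R.
  assert (E1 : rin (P (ca_star u) w) x1 = rin w (P u x1)) by (unfold rin; rewrite ucp_herm; reflexivity).
  assert (E2 : rin (P (ca_star v) w) x2 = rin w (P v x2)) by (unfold rin; rewrite ucp_herm; reflexivity).
  assert (E3 : rin (P (ca_mul (ca_star v) u) x1) x2 = rin (P (ca_mul (ca_star u) v) x2) x1).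
  { unfold rin. replace (ca_mul (ca_star v) u) with (ca_star (ca_mul (ca_star u) v))
      by (rewrite ca_starM, ca_starK; reflexivity).
    rewrite ucp_herm. apply rin_sym. }
  rewrite E1, E2, E3 in R. unfold w in R.
  rewrite !rin_addl, !rin_addr in R.
  rewrite <- !rin_self.
  rewrite (rin_sym (P u x1) (P v x2)) in R.
  lra.
Qed.

End UCP.


Lemma quad_lemma (K a b : R) : (forall t, 0 <= t * t * K * a + b - 2 * t * K) -> 0 <= K -> 0 <= a ->
  K <= a * b.
Proof.
  intros Q HK Ha. pose proof (Q 0) as Q0.
  destruct (Req_dec K 0) as [K0|K0]. subst. nra.
  destruct (Req_dec a 0) as [A0|A0].
  - subst. specialize (Q ((b + 1) / (2 * K))).
    replace (2 * ((b + 1) / (2 * K)) * K) with (b + 1) in Q by (field; lra). nra.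
  - specialize (Q (/ a)).
    replace (/ a * / a * K * a + b - 2 * / a * K) with (b - K / a) in Q by (field; lra).
    assert (K / a <= b) by lra.
    apply (Rmult_le_reg_r (/ a)). apply Rinv_0_lt_compat; lra.
    replace (a * b * / a) with b by (field; lra). unfold Rdiv in H. lra.
Qed.

Section UCP2.
Context {A : CStarAlgebra} {H : HilbertSpace} (P : A -> H -> H) (hP : is_ucp P).

Definition alph (u : A) (z : H) := rin (P (ca_mul (ca_star u) u) z) z - hnorm (P u z) * hnorm (P u z).

Lemma rin_scal_both (c : Cplx) (x y : H) :
  rin (hs_scal c x) (hs_scal c y) = (Cre c * Cre c + Cim c * Cim c) * rin x y.
Proof. unfold rin. rewrite hs_innerZ, inner_scalr. destruct c. simpl. ring. Qed.

Lemma rin_scalr (c : Cplx) (x y : H) :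
  rin x (hs_scal c y) = Cre c * Cre (hs_inner x y) + Cim c * Cim (hs_inner x y).
Proof. unfold rin. rewrite inner_scalr. destruct c. simpl. ring. Qed.

Lemma alph_scal (u : A) (c : Cplx) (z : H) :
  alph u (hs_scal c z) = (Cre c * Cre c + Cim c * Cim c) * alph u z.
Proof.
  unfold alph. rewrite <- !rin_self, !(ucp_op_scal P hP), !rin_scal_both. ring.
Qed.

Lemma alph_ge0 (u : A) (z : H) : 0 <= alph u z.
Proof.
  pose proof (ucp_schwarz_re P hP u ca_zero z hs_zero) as S.
  rewrite !(ucp_op_zero P hP), hnorm_zero in S. unfold rin in S.
  rewrite ?inner_0l, ?inner_0r in S. unfold alph, rin. simpl in S. lra.
Qed.

Lemma ucp_gcs (u v : A) (eta zeta : H) :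
  let e := hsub (P (ca_mul (ca_star u) v) eta) (P (ca_star u) (P v eta)) in
  let g := hs_inner e zeta in
  Cre g * Cre g + Cim g * Cim g <= alph u zeta * alph v eta.
Proof.
  intros e g.
  set (g1 := hs_inner (P (ca_mul (ca_star u) v) eta) zeta).
  set (g2 := hs_inner (P v eta) (P u zeta)).
  assert (Hg : g = Cadd g1 (Cmul (CofR (-1)) g2)).
  { unfold g, e, hsub. rewrite hs_innerD, inner_oppl, (ucp_herm P hP). reflexivity. }
  set (K := Cre g * Cre g + Cim g * Cim g).
  apply quad_lemma; [| unfold K; nra | apply alph_ge0].
  intro t.
  set (c := mkC (- t * Cre g) (- t * Cim g)).
  pose proof (ucp_schwarz_re P hP u v (hs_scal c zeta) eta) as S.
  fold (alph u (hs_scal c zeta)) in S. fold (alph v eta) in S.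
  rewrite alph_scal in S. rewrite (ucp_op_scal P hP u), !rin_scalr in S.
  fold g1 g2 in S.
  assert (Re : Cre g = Cre g1 - Cre g2) by (rewrite Hg; simpl; ring).
  assert (Im : Cim g = Cim g1 - Cim g2) by (rewrite Hg; simpl; ring).
  unfold c in S. simpl in S. unfold K.
  rewrite Re, Im in *. nra.
Qed.

Lemma ucp_form_pos (x : H) (z : A) : 0 <= Cre (hs_inner (P (ca_mul (ca_star z) z) x) x).
Proof.
  pose proof (alph_ge0 z x). unfold alph, rin in H0. pose proof (hnorm_ge0 (P z x)). nra.
Qed.

Lemma ucp_form_bound (x : H) (c : A) :
  rin (P (ca_mul (ca_star c) c) x) x <= ca_norm c * ca_norm c * (hnorm x * hnorm x).
Proof.
  pose proof (pos_functional_bound (fun z => hs_inner (P z x) x)) as B.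
  unfold rin. rewrite hnorm_sq.
  replace (Cre (hs_inner x x)) with (Cre (hs_inner (P ca_one x) x)) by (rewrite (ucp_one P hP); reflexivity).
  apply B.
  - intros a b. rewrite (ucp_add P hP), hs_innerD. reflexivity.
  - intros d a. rewrite (ucp_scal P hP), hs_innerZ. reflexivity.
  - intro z. apply ucp_form_pos.
Qed.

Lemma alph_bound (u : A) (z : H) : alph u z <= ca_norm u * ca_norm u * (hnorm z * hnorm z).
Proof.
  unfold alph. pose proof (ucp_form_bound z u). pose proof (hnorm_ge0 (P u z)). nra.
Qed.

Lemma ucp_contr (c : A) (x : H) : hnorm (P c x) <= ca_norm c * hnorm x.
Proof.
  pose proof (alph_ge0 c x). pose proof (ucp_form_bound x c). unfold alph in H0.
  pose proof (hnorm_ge0 (P c x)). pose proof (hnorm_ge0 x). pose proof (ca_norm_ge0 c).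
  assert (hnorm (P c x) * hnorm (P c x) <= (ca_norm c * hnorm x) * (ca_norm c * hnorm x)) by nra.
  assert (0 <= ca_norm c * hnorm x) by nra.
  destruct (Rle_dec (hnorm (P c x)) (ca_norm c * hnorm x)); auto. nra.
Qed.

Lemma ucp_gcs_vec (u v : A) (eta : H) :
  let e := hsub (P (ca_mul (ca_star u) v) eta) (P (ca_star u) (P v eta)) in
  hnorm e * hnorm e <= ca_norm u * ca_norm u * alph v eta.
Proof.
  intro e. pose proof (ucp_gcs u v eta e) as G. simpl in G. fold e in G.
  rewrite inner_im_self in G. rewrite <- hnorm_sq in G.
  pose proof (alph_bound u e). pose proof (alph_ge0 v eta). pose proof (alph_ge0 u e).
  pose proof (hnorm_ge0 e).
  destruct (Req_dec (hnorm e) 0) as [Z|Z]. rewrite Z. pose proof (ca_norm_ge0 u). nra.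
  assert (hnorm e * hnorm e * (hnorm e * hnorm e) <= ca_norm u * ca_norm u * (hnorm e * hnorm e) * alph v eta) by nra.
  assert (0 < hnorm e * hnorm e) by nra.
  apply (Rmult_le_reg_r (hnorm e * hnorm e)). auto. nra.
Qed.

End UCP2.


Section Rep.
Context {A : CStarAlgebra} {H : HilbertSpace} (p : A -> H -> H) (hp : is_unital_star_rep p).

Lemma rep_op_add a x y : p a (hs_add x y) = hs_add (p a x) (p a y).
Proof. destruct hp as [B _]. apply (proj1 (proj1 (B a))). Qed.
Lemma rep_op_scal a c x : p a (hs_scal c x) = hs_scal c (p a x).
Proof. destruct hp as [B _]. apply (proj2 (proj1 (B a))). Qed.
Lemma rep_add a b x : p (ca_add a b) x = hs_add (p a x) (p b x).
Proof. destruct hp as [_ [[L _] _]]. apply L. Qed.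
Lemma rep_scal c a x : p (ca_scal c a) x = hs_scal c (p a x).
Proof. destruct hp as [_ [[_ L] _]]. apply L. Qed.
Lemma rep_mul a b x : p (ca_mul a b) x = p a (p b x).
Proof. destruct hp as [_ [_ [M _]]]. apply M. Qed.
Lemma rep_one x : p ca_one x = x.
Proof. destruct hp as [_ [_ [_ [O _]]]]. apply O. Qed.
Lemma rep_star a x y : hs_inner (p (ca_star a) x) y = hs_inner x (p a y).
Proof. destruct hp as [_ [_ [_ [_ S]]]]. apply S. Qed.
Lemma rep_opp a x : p (ca_opp a) x = hs_opp (p a x).
Proof. rewrite a_opp_scal, h_opp_scal. apply rep_scal. Qed.
Lemma rep_sub a b x : p (asub a b) x = hsub (p a x) (p b x).
Proof. unfold asub, hsub. rewrite rep_add, rep_opp. reflexivity. Qed.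

Lemma rep_contr (c : A) (x : H) : hnorm (p c x) <= ca_norm c * hnorm x.
Proof.
  pose proof (pos_functional_bound (fun z => hs_inner (p z x) x)) as B.
  assert (E : forall z, Cre (hs_inner (p (ca_mul (ca_star z) z) x) x) = hnorm (p z x) * hnorm (p z x)).
  { intro z. rewrite rep_mul, rep_star, hnorm_sq. reflexivity. }
  specialize (B ltac:(intros; cbv beta; rewrite rep_add, hs_innerD; reflexivity)
                ltac:(intros; cbv beta; rewrite rep_scal, hs_innerZ; reflexivity)
                ltac:(intro z; cbv beta; rewrite E; pose proof (hnorm_ge0 (p z x)); nra) c).
  simpl in B. rewrite E, rep_one, <- hnorm_sq in B.
  pose proof (hnorm_ge0 (p c x)). pose proof (hnorm_ge0 x). pose proof (ca_norm_ge0 c).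
  assert (0 <= ca_norm c * hnorm x) by nra.
  destruct (Rle_dec (hnorm (p c x)) (ca_norm c * hnorm x)); auto. nra.
Qed.

Lemma adj_spec (D : A) : forall x y, hs_inner (p D x) y = hs_inner x (adjoint (p D) y).
Proof.
  unfold adjoint. apply epsilon_spec. exists (p (ca_star D)).
  intros x y. rewrite <- rep_star, ca_starK. reflexivity.
Qed.

End Rep.

Section St.
Context {A : CStarAlgebra} (psi : A -> Cplx) (hpsi : is_state psi).

Lemma st_add a b : psi (ca_add a b) = Cadd (psi a) (psi b).
Proof. apply (proj1 hpsi). Qed.
Lemma st_scal c a : psi (ca_scal c a) = Cmul c (psi a).
Proof. apply (proj1 (proj2 hpsi)). Qed.
Lemma st_pos z : Cim (psi (ca_mul (ca_star z) z)) = 0 /\ 0 <= Cre (psi (ca_mul (ca_star z) z)).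
Proof. apply (proj1 (proj2 (proj2 hpsi))). Qed.
Lemma st_one : psi ca_one = Defs.C1.
Proof. apply (proj2 (proj2 (proj2 hpsi))). Qed.
Lemma st_opp a : psi (ca_opp a) = Cmul (CofR (-1)) (psi a).
Proof. rewrite a_opp_scal. apply st_scal. Qed.

Lemma st_bound (c : A) : Cre (psi (ca_mul (ca_star c) c)) <= ca_norm c * ca_norm c.
Proof.
  pose proof (pos_functional_bound psi st_add st_scal (fun z => proj2 (st_pos z)) c) as B.
  rewrite st_one in B. simpl in B. lra.
Qed.

Lemma st_star_re (x : A) : Cre (psi (ca_star x)) = Cre (psi x).
Proof.
  set (i := mkC 0 1).
  set (z := ca_add ca_one (ca_scal i x)).
  destruct (st_pos z) as [I _].
  unfold z in I. rewrite ca_starD, a_star1, ca_starZ in I.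
  rewrite ca_mulDl, !ca_mulDr, ca_mul1l, ca_mul1r, ca_mul1l, ca_scal_mull, ca_scal_mulr, ca_scalA in I.
  rewrite !st_add, !st_scal, st_one in I. simpl in I.
  destruct (st_pos x) as [I2 _]. rewrite I2 in I. lra.
Qed.

Lemma Cabs_nonneg_real (z : Cplx) : Cim z = 0 -> 0 <= Cre z -> Cabs z = Cre z.
Proof.
  intros I R. unfold Cabs. rewrite I. replace (Cre z * Cre z + 0 * 0) with (Rsqr (Cre z)) by (unfold Rsqr; ring).
  apply sqrt_Rsqr. auto.
Qed.

Lemma st_abs_sq (z : A) : Cabs (psi (ca_mul (ca_star z) z)) = Cre (psi (ca_mul (ca_star z) z)).
Proof. destruct (st_pos z). apply Cabs_nonneg_real; auto. Qed.

Lemma st_defect (d : A) : ca_norm d = 1 ->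
  Cre (psi (ca_mul (ca_star (asub ca_one d)) (asub ca_one d))) <= 2 - 2 * Cre (psi d).
Proof.
  intro Hd. pose proof (st_bound d) as B. rewrite Hd in B.
  pose proof (st_star_re d) as S.
  unfold asub. rewrite ca_starD, a_star1, a_star_opp.
  rewrite ca_mulDl, !ca_mulDr, ca_mul1l, ca_mul1r, !a_mul_oppl, !a_mul_oppr, a_opp_opp, ca_mul1l.
  rewrite !st_add, !st_opp, st_one. simpl. lra.
Qed.

End St.


Section HA.
Context {H : HilbertSpace}.
Lemma h_sub_add (a b : H) : hs_add (hsub a b) b = a.
Proof. unfold hsub. rewrite <- hs_addA, (hs_addC (hs_opp b)), hs_addN, hs_add0. reflexivity. Qed.
Lemma h_sub_sub (a b : H) : hsub a (hsub a b) = b.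
Proof.
  unfold hsub. rewrite !h_opp_scal, hs_scalDr, hs_scalA.
  replace (Cmul (CofR (-1)) (CofR (-1))) with Defs.C1 by cext. rewrite hs_scal1, hs_addA.
  rewrite <- h_opp_scal, hs_addN, h_add0l. reflexivity.
Qed.
Lemma hnorm_sub_le (a b : H) : hnorm (hsub a b) <= hnorm a + hnorm b.
Proof. unfold hsub. rewrite <- (hnorm_opp b). apply hnorm_triangle. Qed.
Lemma rin_abs (x y : H) : Rabs (rin x y) <= hnorm x * hnorm y.
Proof.
  apply Rabs_le. split.
  - pose proof (cauchy_schwarz_re (hs_opp x) y). rewrite rin_oppl, hnorm_opp in H0. lra.
  - apply cauchy_schwarz_re.
Qed.
Lemma rin_subl (x y z : H) : rin (hsub x y) z = rin x z - rin y z.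
Proof. unfold hsub. rewrite rin_addl, rin_oppl. ring. Qed.
End HA.

Section Est.
Context {A : CStarAlgebra} {H : HilbertSpace} (pi Pi : A -> H -> H)
  (hpi : is_unital_star_rep pi) (hPi : is_ucp Pi).

Lemma alpha_small (Dm : A) (eta : H) : (forall y, Pi Dm y = pi Dm y) -> ca_norm Dm = 1 ->
  alph Pi Dm eta <= 2 * hnorm (hsub eta (pi Dm eta)) * hnorm eta.
Proof.
  intros hag hm. unfold alph. rewrite hag.
  pose proof (ucp_form_bound Pi hPi eta Dm) as B. rewrite hm in B.
  pose proof (rep_contr pi hpi Dm eta) as C. rewrite hm in C.
  pose proof (hnorm_triangle (hsub eta (pi Dm eta)) (pi Dm eta)) as T. rewrite h_sub_add in T.
  pose proof (hnorm_ge0 eta). pose proof (hnorm_ge0 (pi Dm eta)). pose proof (hnorm_ge0 (hsub eta (pi Dm eta))).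
  nra.
Qed.

Lemma theta_eq (Dm Dn : A) (x : H) :
  pi (ca_mul (asub ca_one Dm) Dn) x = hsub (pi Dn x) (pi Dm (pi Dn x)).
Proof. rewrite (rep_mul pi hpi), (rep_sub pi hpi), (rep_one pi hpi). reflexivity. Qed.

Lemma est1 (a Dm Dn : A) (x : H) (r s : R) :
  (forall y, Pi Dm y = pi Dm y) -> ca_norm Dm = 1 -> ca_norm Dn = 1 ->
  ca_norm (ca_mul (asub ca_one Dm) Dn) <= r -> 0 <= s -> 2 * r <= s * s ->
  hnorm (Pi a (pi Dn x)) <= (ca_norm a * r + ca_norm (ca_mul a Dm) + ca_norm a * s) * hnorm x.
Proof.
  intros hag hm hn hr hs hrs.
  set (eta := pi Dn x).
  set (th := hsub eta (pi Dm eta)).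
  assert (Heta : hnorm eta <= hnorm x).
  { pose proof (rep_contr pi hpi Dn x). rewrite hn in H0. unfold eta. lra. }
  assert (Hth : hnorm th <= r * hnorm x).
  { unfold th, eta. rewrite <- theta_eq. pose proof (rep_contr pi hpi (ca_mul (asub ca_one Dm) Dn) x).
    pose proof (hnorm_ge0 x). nra. }
  pose proof (hnorm_ge0 x) as Hx. pose proof (ca_norm_ge0 a) as Ha.
  pose proof (alpha_small Dm eta hag hm) as Al. fold th in Al.
  pose proof (ucp_gcs_vec Pi hPi (ca_star a) Dm eta) as G. simpl in G.
  rewrite ca_starK, a_norm_star in G.
  set (e := hsub (Pi (ca_mul a Dm) eta) (Pi a (Pi Dm eta))) in G.
  assert (He : hnorm e <= ca_norm a * s * hnorm x).
  { pose proof (hnorm_ge0 e). pose proof (hnorm_ge0 th). pose proof (hnorm_ge0 eta).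
    assert (hnorm e * hnorm e <= (ca_norm a * s * hnorm x) * (ca_norm a * s * hnorm x)).
    { eapply Rle_trans. apply G. 
      assert (alph Pi Dm eta <= 2 * r * (hnorm x * hnorm x)) by nra.
      assert (0 <= ca_norm a * ca_norm a) by nra.
      assert (2 * r * (hnorm x * hnorm x) <= s * s * (hnorm x * hnorm x)) by nra.
      nra. }
    assert (0 <= ca_norm a * s * hnorm x) by (apply Rmult_le_pos; nra).
    destruct (Rle_dec (hnorm e) (ca_norm a * s * hnorm x)); auto. nra. }
  assert (Dec : Pi a eta = hs_add (Pi a th) (hsub (Pi (ca_mul a Dm) eta) e)).
  { unfold e. rewrite h_sub_sub, <- (ucp_op_add Pi hPi). f_equal. unfold th.
    rewrite hag. symmetry. apply h_sub_add. }
  rewrite Dec. eapply Rle_trans. apply hnorm_triangle.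
  pose proof (hnorm_sub_le (Pi (ca_mul a Dm) eta) e).
  pose proof (ucp_contr Pi hPi a th). pose proof (ucp_contr Pi hPi (ca_mul a Dm) eta).
  pose proof (ca_norm_ge0 (ca_mul a Dm)). pose proof (hnorm_ge0 th).
  nra.
Qed.

End Est.

Lemma Rabs_le_between (x b : R) : Rabs x <= b -> - b <= x <= b.
Proof. unfold Rabs. destruct (Rcase_abs x); intros; lra. Qed.

Lemma prod_le (X Y Bx By : R) : 0 <= X -> X <= Bx -> 0 <= Y -> Y <= By -> X * Y <= Bx * By.
Proof. intros. apply Rmult_le_compat; auto. Qed.

Section Est2.
Context {A : CStarAlgebra} {H : HilbertSpace} (pi Pi : A -> H -> H)
  (hpi : is_unital_star_rep pi) (hPi : is_ucp Pi).

Lemma e_bound (a Dm Dn : A) (x : H) (r s : R) :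
  (forall y, Pi Dm y = pi Dm y) -> ca_norm Dm = 1 -> ca_norm Dn = 1 ->
  ca_norm (ca_mul (asub ca_one Dm) Dn) <= r -> 0 <= s -> 2 * r <= s * s ->
  hnorm (hsub (Pi (ca_mul a Dm) (pi Dn x)) (Pi a (Pi Dm (pi Dn x)))) <= ca_norm a * s * hnorm x.
Proof.
  intros hag hm hn hr hs hrs.
  set (eta := pi Dn x).
  set (th := hsub eta (pi Dm eta)).
  assert (Heta : hnorm eta <= hnorm x).
  { pose proof (rep_contr pi hpi Dn x). rewrite hn in H0. unfold eta. lra. }
  assert (Hth : hnorm th <= r * hnorm x).
  { unfold th, eta. rewrite <- (theta_eq pi hpi). pose proof (rep_contr pi hpi (ca_mul (asub ca_one Dm) Dn) x).
    pose proof (hnorm_ge0 x). nra. }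
  pose proof (hnorm_ge0 x) as Hx. pose proof (ca_norm_ge0 a) as Ha.
  pose proof (alpha_small pi Pi hpi hPi Dm eta hag hm) as Al. fold th in Al.
  pose proof (ucp_gcs_vec Pi hPi (ca_star a) Dm eta) as G. simpl in G.
  rewrite ca_starK, a_norm_star in G.
  set (e := hsub (Pi (ca_mul a Dm) eta) (Pi a (Pi Dm eta))) in G.
  pose proof (hnorm_ge0 e). pose proof (hnorm_ge0 th). pose proof (hnorm_ge0 eta).
  assert (hnorm e * hnorm e <= (ca_norm a * s * hnorm x) * (ca_norm a * s * hnorm x)).
  { eapply Rle_trans. apply G.
    assert (alph Pi Dm eta <= 2 * r * (hnorm x * hnorm x)) by nra.
    assert (0 <= ca_norm a * ca_norm a) by nra.
    assert (2 * r * (hnorm x * hnorm x) <= s * s * (hnorm x * hnorm x)) by nra.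
    nra. }
  assert (0 <= ca_norm a * s * hnorm x) by (apply Rmult_le_pos; nra).
  destruct (Rle_dec (hnorm e) (ca_norm a * s * hnorm x)); auto. nra.
Qed.

Lemma est2 (a Dm Dn : A) (x w : H) (r s : R) :
  (forall y, Pi Dm y = pi Dm y) -> ca_norm Dm = 1 -> ca_norm Dn = 1 ->
  ca_norm (ca_mul (asub ca_one Dm) Dn) <= r -> 0 <= s -> 2 * r <= s * s ->
  rin (Pi a (pi Dn x)) (pi Dn w) <=
    (2 * ca_norm a * r + 2 * ca_norm a * s + ca_norm (ca_mul (ca_mul (ca_star Dm) a) Dm))
      * hnorm x * hnorm w.
Proof.
  intros hag hm hn hr hs hrs.
  set (Na := ca_norm a). pose proof (ca_norm_ge0 a) as Ha. fold Na in Ha.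
  set (e1 := hsub (Pi (ca_mul a Dm) (pi Dn x)) (Pi a (Pi Dm (pi Dn x)))).
  assert (He1 : hnorm e1 <= Na * s * hnorm x) by (apply (e_bound a Dm Dn x r s); auto).
  set (eta1 := pi Dn x). set (eta2 := pi Dn w).
  fold eta1 in e1.
  set (th1 := hsub eta1 (pi Dm eta1)). set (th2 := hsub eta2 (pi Dm eta2)).
  pose proof (hnorm_ge0 x) as Hx. pose proof (hnorm_ge0 w) as Hw. pose proof (hr) as hr'.
  assert (Hr0 : 0 <= r) by (pose proof (ca_norm_ge0 (ca_mul (asub ca_one Dm) Dn)); lra).
  assert (He1n : hnorm eta1 <= hnorm x).
  { pose proof (rep_contr pi hpi Dn x). rewrite hn in H0. unfold eta1. lra. }
  assert (He2n : hnorm eta2 <= hnorm w).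
  { pose proof (rep_contr pi hpi Dn w). rewrite hn in H0. unfold eta2. lra. }
  assert (Ht1 : hnorm th1 <= r * hnorm x).
  { unfold th1, eta1. rewrite <- (theta_eq pi hpi). pose proof (rep_contr pi hpi (ca_mul (asub ca_one Dm) Dn) x).
    nra. }
  assert (Ht2 : hnorm th2 <= r * hnorm w).
  { unfold th2, eta2. rewrite <- (theta_eq pi hpi). pose proof (rep_contr pi hpi (ca_mul (asub ca_one Dm) Dn) w).
    nra. }
  assert (Hr1 : hnorm (pi Dm eta1) <= hnorm x).
  { pose proof (rep_contr pi hpi Dm eta1). rewrite hm in H0. lra. }
  assert (Hr2 : hnorm (pi Dm eta2) <= hnorm w).
  { pose proof (rep_contr pi hpi Dm eta2). rewrite hm in H0. lra. }
  assert (D1 : Pi a eta1 = hs_add (Pi a th1) (Pi a (pi Dm eta1))).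
  { rewrite <- (ucp_op_add Pi hPi). unfold th1. rewrite h_sub_add. reflexivity. }
  assert (D2 : eta2 = hs_add th2 (pi Dm eta2)) by (unfold th2; rewrite h_sub_add; reflexivity).
  assert (D3 : Pi a (pi Dm eta1) = hsub (Pi (ca_mul a Dm) eta1) e1).
  { unfold e1. rewrite h_sub_sub, hag. reflexivity. }
  set (e2 := hsub (Pi (ca_mul (ca_star Dm) (ca_mul a Dm)) eta1) (Pi (ca_star Dm) (Pi (ca_mul a Dm) eta1))).
  assert (D4 : rin (Pi (ca_mul a Dm) eta1) (pi Dm eta2) =
     rin (Pi (ca_mul (ca_star Dm) (ca_mul a Dm)) eta1) eta2 - rin e2 eta2).
  { rewrite <- hag. unfold rin at 1. rewrite <- (ucp_herm Pi hPi). fold (rin (Pi (ca_star Dm) (Pi (ca_mul a Dm) eta1)) eta2).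
    unfold e2. rewrite rin_subl. ring. }
  rewrite D1, rin_addl. rewrite D2 at 2. rewrite rin_addr. rewrite D3 at 2. rewrite (rin_subl _ _ (pi Dm eta2)), D4.
  assert (B1 : rin (Pi a th1) eta2 <= Na * r * hnorm x * hnorm w).
  { pose proof (rin_abs (Pi a th1) eta2). pose proof (ucp_contr Pi hPi a th1).
    assert (hnorm (Pi a th1) * hnorm eta2 <= (Na * (r * hnorm x)) * hnorm w).
    { apply prod_le; auto using hnorm_ge0. eapply Rle_trans. apply H1. fold Na.
      apply Rmult_le_compat_l; auto. }
    apply Rabs_le_between in H0. lra. }
  assert (B2 : rin (Pi a (pi Dm eta1)) th2 <= Na * r * hnorm x * hnorm w).
  { pose proof (rin_abs (Pi a (pi Dm eta1)) th2). pose proof (ucp_contr Pi hPi a (pi Dm eta1)).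
    assert (hnorm (Pi a (pi Dm eta1)) * hnorm th2 <= (Na * hnorm x) * (r * hnorm w)).
    { apply prod_le; auto using hnorm_ge0. eapply Rle_trans. apply H1. fold Na.
      apply Rmult_le_compat_l; auto. }
    apply Rabs_le_between in H0. lra. }
  assert (B3 : - rin e1 (pi Dm eta2) <= Na * s * hnorm x * hnorm w).
  { pose proof (rin_abs e1 (pi Dm eta2)).
    assert (hnorm e1 * hnorm (pi Dm eta2) <= (Na * s * hnorm x) * hnorm w).
    { apply prod_le; auto using hnorm_ge0. }
    apply Rabs_le_between in H0. lra. }
  assert (B4 : rin (Pi (ca_mul (ca_star Dm) (ca_mul a Dm)) eta1) eta2 <=
      ca_norm (ca_mul (ca_mul (ca_star Dm) a) Dm) * hnorm x * hnorm w).
  { rewrite ca_mulA. pose proof (rin_abs (Pi (ca_mul (ca_mul (ca_star Dm) a) Dm) eta1) eta2).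
    pose proof (ucp_contr Pi hPi (ca_mul (ca_mul (ca_star Dm) a) Dm) eta1).
    assert (hnorm (Pi (ca_mul (ca_mul (ca_star Dm) a) Dm) eta1) * hnorm eta2 <=
      (ca_norm (ca_mul (ca_mul (ca_star Dm) a) Dm) * hnorm x) * hnorm w).
    { apply prod_le; auto using hnorm_ge0. eapply Rle_trans. apply H1.
      apply Rmult_le_compat_l; auto. apply ca_norm_ge0. }
    apply Rabs_le_between in H0. lra. }
  assert (B5 : - rin e2 eta2 <= Na * s * hnorm x * hnorm w).
  { pose proof (ucp_gcs Pi hPi Dm (ca_mul a Dm) eta1 eta2) as G. simpl in G. fold e2 in G.
    fold (rin e2 eta2) in G.
    pose proof (alpha_small pi Pi hpi hPi Dm eta2 hag hm) as Al2. fold th2 in Al2.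
    pose proof (alph_bound Pi hPi (ca_mul a Dm) eta1) as Al1.
    pose proof (alph_ge0 Pi hPi Dm eta2). pose proof (alph_ge0 Pi hPi (ca_mul a Dm) eta1).
    pose proof (ca_normM a Dm) as NM. rewrite hm in NM.
    pose proof (ca_norm_ge0 (ca_mul a Dm)). pose proof (hnorm_ge0 th2). pose proof (hnorm_ge0 eta2).
    pose proof (hnorm_ge0 eta1).
    assert (A2 : alph Pi Dm eta2 <= s * s * (hnorm w * hnorm w)) by nra.
    assert (A1 : alph Pi (ca_mul a Dm) eta1 <= Na * Na * (hnorm x * hnorm x)).
    { eapply Rle_trans. apply Al1. fold Na in NM.
      assert (ca_norm (ca_mul a Dm) <= Na) by lra.
      apply prod_le.
      - apply Rmult_le_pos; lra.
      - apply prod_le; lra.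
      - apply Rmult_le_pos; lra.
      - apply prod_le; lra. }
    assert (rin e2 eta2 * rin e2 eta2 <= (Na * s * hnorm x * hnorm w) * (Na * s * hnorm x * hnorm w)).
    { assert (0 <= Cim (hs_inner e2 eta2) * Cim (hs_inner e2 eta2)) by nra.
      assert (alph Pi Dm eta2 * alph Pi (ca_mul a Dm) eta1 <=
        (s * s * (hnorm w * hnorm w)) * (Na * Na * (hnorm x * hnorm x))) by (apply prod_le; auto).
      nra. }
    assert (0 <= Na * s * hnorm x * hnorm w) by (repeat apply Rmult_le_pos; auto).
    destruct (Rle_dec (- rin e2 eta2) (Na * s * hnorm x * hnorm w)); auto. nra. }
  nra.
Qed.

End Est2.


Lemma norm_sandwich {A : CStarAlgebra} (c d : A) :
  ca_norm (ca_mul (ca_mul (ca_star d) (ca_mul (ca_star c) c)) d) = ca_norm (ca_mul c d) * ca_norm (ca_mul c d).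
Proof.
  rewrite <- ca_cstar, ca_starM. f_equal. rewrite !ca_mulA. reflexivity.
Qed.

Lemma choose_t (Na eps : R) : 0 <= Na -> eps > 0 ->
  exists t, 0 < t /\ t <= 1 /\ t * (1 + 8 * Na) <= eps.
Proof.
  intros HN He. exists (Rmin 1 (eps / (1 + 8 * Na))).
  assert (0 < eps / (1 + 8 * Na)) by (apply Rdiv_lt_0_compat; lra).
  split; [apply Rmin_pos; lra|]. split; [apply Rmin_l|].
  eapply Rle_trans. apply Rmult_le_compat_r. lra. apply Rmin_r.
  right. field. lra.
Qed.

Theorem lemma5p1 (A : CStarAlgebra) (S : A -> Prop) (H : HilbertSpace)
  (pi Pi : A -> H -> H) (psi : A -> Cplx) (D : nat -> A)
  (hS : is_operator_system S)
  (hpi : is_unital_star_rep pi)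
  (hPi : is_ucp Pi)
  (hagree : forall s, S s -> forall x, Pi s x = pi s x)
  (hpsi : is_state psi)
  (hD : is_characteristic_sequence psi D)
  (hDS : forall n, S (D n)) :
  (forall a : A, forall eps, eps > 0 -> exists N, forall n, (n >= N)%nat ->
      opnorm_le (fun x => Pi a (pi (D n) x))
                (sqrt (Cre (psi (ca_mul (ca_star a) a))) + eps)) /\
  (forall a : A, ca_star a = a -> psi a = C0 ->
      forall eps, eps > 0 -> exists N, forall n, (n >= N)%nat ->
      opnorm_le (fun x => adjoint (pi (D n)) (Pi a (pi (D n) x))) eps).
Proof.
  destruct hD as [hD1 [hD2 [_ hD4]]].
  assert (hag : forall n y, Pi (D n) y = pi (D n) y) by (intros; apply hagree, hDS).
  (* choosing m close to psi, and then the defect r small *)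
  assert (Hm : forall t, 0 < t -> forall N0, exists m, (m >= N0)%nat /\ 2 - 2 * Cre (psi (D m)) <= 2 * (t*t*t*t)).
  { intros t Ht N0. destruct (hD2 (t*t*t*t)) as [N2 HN2]. apply Rlt_gt. repeat apply Rmult_lt_0_compat; lra.
    exists (max N0 N2). split. lia. specialize (HN2 (max N0 N2) ltac:(lia)).
    unfold R_dist in HN2. apply Rabs_def2 in HN2. lra. }
  assert (Hr : forall t m, 0 < t -> 2 - 2 * Cre (psi (D m)) <= 2 * (t*t*t*t) ->
      exists N, forall n, (n >= N)%nat -> ca_norm (ca_mul (asub ca_one (D m)) (D n)) <= 2 * (t * t)).
  { intros t m Ht Hdm. set (w := asub ca_one (D m)).
    destruct (hD4 (ca_mul (ca_star w) w) (2 * (t*t*t*t))) as [N HN].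
    apply Rlt_gt. repeat apply Rmult_lt_0_compat; lra.
    exists N. intros n Hn. specialize (HN n Hn). simpl in HN.
    rewrite norm_sandwich, (st_abs_sq psi hpsi) in HN.
    pose proof (st_defect psi hpsi (D m) (hD1 m)) as Def. fold w in Def.
    pose proof (ca_norm_ge0 (ca_mul w (D n))).
    assert (ca_norm (ca_mul w (D n)) * ca_norm (ca_mul w (D n)) <= (2 * (t * t)) * (2 * (t * t))) by nra.
    assert (0 <= 2 * (t * t)) by nra.
    destruct (Rle_dec (ca_norm (ca_mul w (D n))) (2 * (t * t))); auto. nra. }
  split.
  - intros a eps Heps.
    set (Na := ca_norm a). pose proof (ca_norm_ge0 a) as HNa. fold Na in HNa.
    destruct (choose_t Na eps HNa Heps) as [t [Ht0 [Ht1 Hte]]].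
    set (X := Cre (psi (ca_mul (ca_star a) a))).
    assert (HX : 0 <= X) by (apply (st_pos psi hpsi a)).
    destruct (hD4 (ca_mul (ca_star a) a) (t * t)) as [N1 HN1]. apply Rlt_gt; nra.
    destruct (Hm t Ht0 N1) as [m [Hm1 Hm2]].
    specialize (HN1 m Hm1). simpl in HN1. rewrite norm_sandwich, (st_abs_sq psi hpsi) in HN1. fold X in HN1.
    assert (HaD : ca_norm (ca_mul a (D m)) <= sqrt X + t).
    { pose proof (sqrt_pos X). pose proof (sqrt_sqrt X HX). pose proof (ca_norm_ge0 (ca_mul a (D m))).
      assert (ca_norm (ca_mul a (D m)) * ca_norm (ca_mul a (D m)) <= (sqrt X + t) * (sqrt X + t)) by nra.
      destruct (Rle_dec (ca_norm (ca_mul a (D m))) (sqrt X + t)); auto. nra. }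
    destruct (Hr t m Ht0 Hm2) as [N HN].
    exists N. intros n Hn x. simpl.
    pose proof (est1 pi Pi hpi hPi a (D m) (D n) x (2 * (t * t)) (2 * t) (hag m) (hD1 m) (hD1 n) (HN n Hn)
      ltac:(lra) ltac:(nra)) as E.
    fold Na in E. eapply Rle_trans. apply E. apply Rmult_le_compat_r. apply hnorm_ge0.
    fold X. assert (Na * (t * t) <= Na * t) by (apply Rmult_le_compat_l; nra). assert (0 <= Na * t) by nra. lra.
  - intros a _ Hpa eps Heps.
    set (Na := ca_norm a). pose proof (ca_norm_ge0 a) as HNa. fold Na in HNa.
    destruct (choose_t Na eps HNa Heps) as [t [Ht0 [Ht1 Hte]]].
    destruct (hD4 a t) as [N4 HN4]. lra.
    destruct (Hm t Ht0 N4) as [m [Hm1 Hm2]].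
    specialize (HN4 m Hm1). simpl in HN4. rewrite Hpa, Cabs_C0 in HN4.
    destruct (Hr t m Ht0 Hm2) as [N HN].
    exists N. intros n Hn x.
    set (w := adjoint (pi (D n)) (Pi a (pi (D n) x))).
    pose proof (est2 pi Pi hpi hPi a (D m) (D n) x w (2 * (t * t)) (2 * t) (hag m) (hD1 m) (hD1 n) (HN n Hn)
      ltac:(lra) ltac:(nra)) as E.
    assert (Ew : rin (Pi a (pi (D n) x)) (pi (D n) w) = hnorm w * hnorm w).
    { rewrite <- rin_self, rin_sym. unfold rin. rewrite (adj_spec pi hpi (D n)). reflexivity. }
    rewrite Ew in E. fold Na in E.
    pose proof (hnorm_ge0 w). pose proof (hnorm_ge0 x).
    assert (Na * (t * t) <= Na * t) by (apply Rmult_le_compat_l; nra). assert (0 <= Na * t) by nra.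
    assert (Bd : 2 * Na * (2 * (t * t)) + 2 * Na * (2 * t) + ca_norm (ca_mul (ca_mul (ca_star (D m)) a) (D m)) <= eps)
      by lra.
    assert (hnorm w * hnorm w <= eps * hnorm x * hnorm w).
    { eapply Rle_trans. apply E. apply Rmult_le_compat_r. auto. apply Rmult_le_compat_r; auto. }
    destruct (Req_dec (hnorm w) 0) as [Z|Z]. rewrite Z. nra.
    apply (Rmult_le_reg_r (hnorm w)). lra. nra.
Qed.
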